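(* Let $\mathcal{X},\mathcal{Y}$ be finite, $P_X$ a distribution on $\mathcal{X}$, $R\ge0$, and $M=\exp(nR)$. For any joint $n$-type $Q_{\bar X\bar Y}\in\mathcal{P}_n(\mathcal{X}\times\mathcal{Y})$ with $\mathcal{Y}$-marginal $Q_{\bar Y}$, \[ D(Q_{\bar X\bar Y}\|P_XQ_{\bar Y})+\tfrac12\big[R-D(Q_{\bar X\bar Y}\|P_XQ_{\bar Y})\big]_+\le-\frac1n\log\Big(\tfrac12\mathfrak{Y}(M,Q_{\bar X\bar Y})\Big)\le D(Q_{\bar X\bar Y}\|P_XQ_{\bar Y})+\tfrac12\big[R-D(Q_{\bar X\bar Y}\|P_XQ_{\bar Y})\big]_++\kappa_n, \] where $[f]_+=\max\{0,f\}$ and $\kappa_n=\frac{|\mathcal{X}||\mathcal{Y}|}{n}\log(n+1)+\frac1n\log2$.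
   Context: Logs and exps use a common base; $D$ is relative entropy. For $y^n$ of type $Q_{\bar Y}$, let $Q_{\bar X|\bar Y}$ be the conditional type with $Q_{\bar X|\bar Y}Q_{\bar Y}=Q_{\bar X\bar Y}$, let $\mathcal{T}^n_{Q_{\bar X|\bar Y}}(y^n)$ be the set of $x^n$ whose joint empirical distribution with $y^n$ is $Q_{\bar X\bar Y}$, and $p_{Q_{\bar X|\bar Y}}(y^n)=\mathbb{P}[X^n\in\mathcal{T}^n_{Q_{\bar X|\bar Y}}(y^n)]$ with $X^n$ i.i.d. $P_X$ (this depends on $y^n$ only through $Q_{\bar Y}$). Define $\mathfrak{Y}(M,Q_{\bar X\bar Y})=\min\{2p_{Q_{\bar X|\bar Y}}(y^n),\,M^{-1/2}p_{Q_{\bar X|\bar Y}}^{1/2}(y^n)\}$. *)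

(* Defs.v *)
From HB Require Import structures.
From mathcomp Require Import all_boot all_order all_algebra.
From mathcomp Require Import boolp classical_sets reals constructive_ereal ereal sequences exp.
Set Implicit Arguments. Unset Strict Implicit. Unset Printing Implicit Defensive.
Import Order.TTheory GRing.Theory Num.Theory.
Local Open Scope ring_scope.

Section Defs.
Context {R : realType}.

Definition is_distr (A : finType) (P : A -> R) : Prop :=
  (forall a, 0 <= P a) /\ \sum_(a : A) P a = 1.

Definition is_ntype (A : finType) (n : nat) (Q : A -> R) : Prop :=
  is_distr Q /\ forall a, exists k : nat, Q a = k%:R / n%:R.

Definition marginalY (X Y : finType) (Q : X * Y -> R) (b : Y) : R :=
  \sum_(a : X) Q (a, b).

Definition emp_type (A : finType) (n : nat) (y : {ffun 'I_n -> A}) (b : A) : R :=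
  #|[set i : 'I_n | y i == b]|%:R / n%:R.

Definition cond_type_class (X Y : finType) (n : nat) (Q : X * Y -> R)
    (y : {ffun 'I_n -> Y}) : {set {ffun 'I_n -> X}} :=
  [set x : {ffun 'I_n -> X} |
     [forall ab : X * Y,
        #|[set i : 'I_n | (x i, y i) == ab]|%:R / n%:R == Q ab]].

(* p_{Q_{X|Y}}(y^n) = P[X^n in T(y^n)], X^n i.i.d. P_X *)
Definition p_cond (X Y : finType) (P : X -> R) (n : nat) (Q : X * Y -> R)
    (y : {ffun 'I_n -> Y}) : R :=
  \sum_(x in cond_type_class Q y) \prod_(i < n) P (x i).

Definition frakY (M p : R) : R :=
  Num.min (2 * p) (M `^ (- 2^-1) * p `^ (2^-1)).

Definition relent (X Y : finType) (Q : X * Y -> R) (P : X -> R) : \bar R :=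
  if [exists ab : X * Y, (0 < Q ab) && (P ab.1 * marginalY Q ab.2 == 0)]
  then +oo%E
  else (\sum_(ab : X * Y | 0 < Q ab)
          Q ab * ln (Q ab / (P ab.1 * marginalY Q ab.2)))%:E.

Definition kappa (X Y : finType) (n : nat) : R :=
  (#|X| * #|Y|)%:R / n%:R * ln (n.+1)%:R + n%:R^-1 * ln 2.

End Defs.

(* Main.v *)
Require Import Defs.
From HB Require Import structures.
From mathcomp Require Import all_boot all_order all_algebra.
From mathcomp Require Import boolp classical_sets reals constructive_ereal ereal sequences exp.
From mathcomp Require Import zify ring lra.
Import Order.TTheory GRing.Theory Num.Theory.
Local Open Scope ring_scope.

Section NatPart.
Set Implicit Arguments. Unset Strict Implicit. Unset Printing Implicit Defensive.
Local Open Scope nat_scope.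

Section Counting.
Variables (X Y : finType).

Definition cntf m (x : 'I_m -> X) (y : 'I_m -> Y) (ab : X * Y) : nat :=
  \sum_(i < m) ((x i, y i) == ab).
Definition ycnt m (y : 'I_m -> Y) (b : Y) : nat := \sum_(i < m) (y i == b).
Definition Sc m (y : 'I_m -> Y) (c : X * Y -> nat) : nat :=
  \sum_(x : {ffun 'I_m -> X}) [forall ab, cntf x y ab == c ab].

Definition ext m (a : X) (x' : {ffun 'I_m -> X}) : {ffun 'I_m.+1 -> X} :=
  [ffun i => if unlift ord0 i is Some j then x' j else a].

Lemma ext_ord0 m a (x' : {ffun 'I_m -> X}) : ext a x' ord0 = a.
Proof. by rewrite ffunE unlift_none. Qed.
Lemma ext_lift m a (x' : {ffun 'I_m -> X}) j : ext a x' (lift ord0 j) = x' j.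
Proof. by rewrite ffunE liftK. Qed.

Lemma count_types m : forall (y : 'I_m -> Y) (c : X * Y -> nat),
  (forall b, \sum_a c (a, b) = ycnt y b) ->
  Sc y c * \prod_ab (c ab)`! = \prod_b (ycnt y b)`!.
Proof.
elim: m => [|m IH] y c H.
  have c0 : forall ab, c ab = 0.
    move=> [a b]; have := H b; rewrite /ycnt big_ord0 => /eqP.
    by rewrite sum_nat_eq0 => /forallP/(_ a)/eqP.
  rewrite big1 ?muln1; last by move=> ab _; rewrite c0.
  rewrite big1; last by move=> b _; rewrite /ycnt big_ord0.
  rewrite /Sc (eq_bigr (fun _ => 1)); last first.
    move=> x _; apply/eqP; rewrite eqb1; apply/forallP => ab.
    by rewrite /cntf big_ord0 c0.
  by rewrite sum1_card card_ffun card_ord.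
set y' := fun j : 'I_m => y (lift ord0 j).
set b0 := y ord0.
have cntE : forall a (x' : {ffun 'I_m -> X}) ab,
    cntf (ext a x') y ab = ((a, b0) == ab) + cntf x' y' ab.
  move=> a x' ab; rewrite /cntf big_ord_recl ext_ord0; congr (_ + _).
  by apply: eq_bigr => j _; rewrite ext_lift.
have ycE : forall b, ycnt y b = (b0 == b) + ycnt y' b.
  by move=> b; rewrite /ycnt big_ord_recl.
have -> : Sc y c = \sum_a \sum_(x' : {ffun 'I_m -> X})
     [forall ab, ((a, b0) == ab) + cntf x' y' ab == c ab].
  rewrite pair_big /Sc (reindex (fun p : X * {ffun 'I_m -> X} => ext p.1 p.2)) /=.
    by apply: eq_bigr => p _; congr (nat_of_bool _); apply: eq_forallb => ab; rewrite cntE.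
  exists (fun x : {ffun 'I_m.+1 -> X} => (x ord0, [ffun j => x (lift ord0 j)])).
    by move=> [a x'] _ /=; rewrite ext_ord0; congr pair; apply/ffunP => j; rewrite ffunE ext_lift.
  move=> x _ /=; apply/ffunP => i; rewrite ffunE.
  by case: unliftP => [j ->|->]; rewrite ?ffunE.
have key : forall a, (\sum_(x' : {ffun 'I_m -> X})
     [forall ab, ((a, b0) == ab) + cntf x' y' ab == c ab]) * \prod_ab (c ab)`!
     = c (a, b0) * \prod_b (ycnt y' b)`!.
  move=> a.
  case: (posnP (c (a, b0))) => [c0|cpos].
    rewrite c0 big1 // => x' _.
    case: forallP => // /(_ (a, b0)); rewrite eqxx c0 /=.
    by move=> /eqP; lia.
  set c' := fun ab => c ab - ((a, b0) == ab).
  have cE : forall ab, c ab = ((a, b0) == ab) + c' ab.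
    move=> ab; rewrite /c'; case: eqP => [<-|_] /=; last by rewrite subn0.
    by rewrite subn1 add1n prednK.
  have H' : forall b, \sum_a' c' (a', b) = ycnt y' b.
    move=> b; apply/eqP; rewrite -(eqn_add2l (b0 == b)) -ycE -H; apply/eqP.
    rewrite [RHS](eq_bigr (fun a' => ((a, b0) == (a', b)) + c' (a', b))); last by move=> a' _; exact: cE.
    rewrite big_split /=; congr (_ + _).
    rewrite (bigD1 a) //= big1 ?addn0; first by rewrite xpair_eqE eqxx.
    by move=> a' /negbTE na; rewrite xpair_eqE eq_sym na.
  rewrite -(IH y' c' H').
  have -> : \prod_ab (c ab)`! = c (a, b0) * \prod_ab (c' ab)`!.
    rewrite (bigD1 (a, b0)) //= [in RHS](bigD1 (a, b0)) //=.
    rewrite mulnA; congr (_ * _).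
      by rewrite [in LHS]cE eqxx /= factS; congr (_ * _); rewrite cE eqxx.
    by apply: eq_bigr => ab ne; rewrite cE eq_sym (negbTE ne).
  rewrite mulnCA /Sc; do 2 f_equal.
  apply: eq_bigr => x' _; congr (nat_of_bool _); apply: eq_forallb => ab.
  rewrite cE; case: ((a, b0) == ab) => /=; apply/eqP/eqP; lia.
rewrite big_distrl /= (eq_bigr _ (fun a _ => key a)) -big_distrl /= H ycE eqxx /=.
rewrite [in RHS](bigD1 b0) //= ycE eqxx /= factS -mulnA add1n; f_equal.
rewrite [in LHS](bigD1 b0) //=; f_equal.
by apply: eq_bigr => b nb; rewrite ycE eq_sym (negbTE nb).
Qed.

End Counting.

Lemma leq_expl m n e : m <= n -> m ^ e <= n ^ e.
Proof. by move=> le; elim: e => // e IH; rewrite !expnS leq_mul. Qed.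

Lemma factA c d : (c + d)`! <= c`! * (c + d) ^ d.
Proof.
elim: d => [|d IH]; first by rewrite addn0 expn0 muln1.
rewrite addnS factS expnS mulnCA leq_mul2l; apply/orP; right.
apply: (leq_trans IH); rewrite leq_mul2l leq_expl ?orbT //.
Qed.

Lemma factB N d : N`! * N ^ d <= (N + d)`!.
Proof.
elim: d => [|d IH]; first by rewrite addn0 expn0 muln1.
rewrite addnS factS expnS mulnCA; apply: leq_mul => //.
by lia.
Qed.

Lemma fact_pow N c : N`! * N ^ c <= c`! * N ^ N.
Proof.
case: (leqP c N) => [le|lt].
  have [d ->] : exists d, N = c + d by exists (N - c); lia.
  by rewrite expnD [(c + d) ^ c * _]mulnC mulnA leq_mul2r factA orbT.
have [d ->] : exists d, c = N + d by exists (c - N); lia.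
by rewrite expnD mulnCA [_ * N ^ N]mulnC leq_mul2l factB orbT.
Qed.

Lemma regroup_nat (I K : finType) (g : I -> K) (F : K -> nat) :
  \prod_i F (g i) = \prod_k F k ^ (\sum_i (g i == k)).
Proof.
rewrite (partition_big g xpredT) //=; apply: eq_bigr => k _.
rewrite (eq_bigr (fun _ => F k)); last by move=> i /eqP ->.
rewrite prod_nat_const; congr (_ ^ _).
rewrite -sum1_card big_mkcond /=; apply: eq_bigr => i _.
by rewrite -[i \in _]/(g i == k); case: (g i == k).
Qed.

Section Main.
Variables (X Y : finType).

Lemma marg m (x : 'I_m -> X) (y : 'I_m -> Y) b :
  \sum_a cntf x y (a, b) = ycnt y b.
Proof.
rewrite /cntf exchange_big /=; apply: eq_bigr => i _.
rewrite (bigD1 (x i)) //= big1 ?addn0; first by rewrite xpair_eqE eqxx.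
by move=> a /negbTE na; rewrite xpair_eqE eq_sym na.
Qed.

Lemma cntf_le m (x : 'I_m -> X) (y : 'I_m -> Y) ab : cntf x y ab <= m.
Proof.
rewrite /cntf; apply: (@leq_trans (\sum_(i < m) 1)); last by rewrite sum1_card card_ord.
by apply: leq_sum => i _; case: (_ == _).
Qed.

Lemma maxterm m (y : 'I_m -> Y) (N c : X * Y -> nat) :
  (forall b, \sum_a N (a, b) = ycnt y b) ->
  Sc y c * \prod_ab N ab ^ c ab <= Sc y N * \prod_ab N ab ^ N ab.
Proof.
move=> HN.
case: (boolP [forall b, \sum_a c (a, b) == ycnt y b]) => [/forallP Hc|Hc]; last first.
  suff -> : Sc y c = 0 by [].
  apply: big1 => x _; case: forallP => //= T.
  move/negP: Hc; case; apply/forallP => b.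
  rewrite -(marg x y b); apply/eqP; apply: eq_bigr => a _.
  by apply/esym/eqP; exact: T.
have Hc' : forall b, \sum_a c (a, b) = ycnt y b by move=> b; apply/eqP.
have pos : 0 < \prod_ab (c ab)`! * \prod_ab (N ab)`!.
  by rewrite muln_gt0; apply/andP; split; apply: prodn_gt0 => ab; exact: fact_gt0.
rewrite -(leq_pmul2r pos).
have -> : Sc y c * \prod_ab N ab ^ c ab * (\prod_ab (c ab)`! * \prod_ab (N ab)`!)
   = (Sc y c * \prod_ab (c ab)`!) * \prod_ab ((N ab)`! * N ab ^ c ab).
  by rewrite big_split /=; ring.
have -> : Sc y N * \prod_ab N ab ^ N ab * (\prod_ab (c ab)`! * \prod_ab (N ab)`!)
   = (Sc y N * \prod_ab (N ab)`!) * \prod_ab ((c ab)`! * N ab ^ N ab).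
  by rewrite big_split /=; ring.
rewrite (count_types Hc') (count_types HN) leq_mul2l; apply/orP; right.
by apply: leq_prod => ab _; exact: fact_pow.
Qed.

Lemma Z_eq m (y : 'I_m -> Y) (N : X * Y -> nat) :
  \sum_(x : {ffun 'I_m -> X}) \prod_i N (x i, y i) = \prod_i \sum_a N (a, y i).
Proof. by rewrite (bigA_distr_bigA (fun i a => N (a, y i))). Qed.

Lemma V_eq m (x : 'I_m -> X) (y : 'I_m -> Y) (N : X * Y -> nat) :
  \prod_i N (x i, y i) = \prod_ab N ab ^ cntf x y ab.
Proof. exact: (regroup_nat (fun i => (x i, y i)) N). Qed.

Lemma bounds m (y : 'I_m -> Y) (N : X * Y -> nat) :
  (forall b, \sum_a N (a, b) = ycnt y b) ->
  Sc y N * \prod_ab N ab ^ N ab <= \prod_i \sum_a N (a, y i) /\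
  \prod_i \sum_a N (a, y i) <= m.+1 ^ (#|X| * #|Y|) * (Sc y N * \prod_ab N ab ^ N ab).
Proof.
move=> HN; rewrite -Z_eq; split.
  rewrite /Sc big_distrl /=; apply: leq_sum => x _.
  case: forallP => /= T; last by rewrite mul0n.
  rewrite mul1n V_eq; apply: leq_prod => ab _; by rewrite (eqP (T ab)).
pose cc (x : {ffun 'I_m -> X}) : {ffun X * Y -> 'I_m.+1} :=
  [ffun ab => inord (cntf x y ab)].
rewrite (partition_big cc xpredT) //=.
have -> : m.+1 ^ (#|X| * #|Y|) = #|{ffun X * Y -> 'I_m.+1}|.
  by rewrite card_ffun card_prod card_ord.
rewrite -sum1_card big_distrl /=; apply: leq_sum => c _; rewrite mul1n.
apply: (leq_trans _ (maxterm (fun ab => val (c ab)) HN)).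
rewrite /Sc big_distrl /= big_mkcond /=; apply: leq_sum => x _.
case: eqP => [<-|_]; last by [].
have ce : forall ab, val (cc x ab) = cntf x y ab.
  by move=> ab; rewrite ffunE /= inordK // ltnS cntf_le.
have -> : [forall ab, cntf x y ab == val (cc x ab)].
  by apply/forallP => ab; rewrite ce.
rewrite mul1n V_eq; apply: leq_prod => ab _; by rewrite ce.
Qed.

Lemma Z_form m (y : 'I_m -> Y) (N : X * Y -> nat) :
  (forall b, \sum_a N (a, b) = ycnt y b) ->
  \prod_i \sum_a N (a, y i) = \prod_ab ycnt y ab.2 ^ N ab.
Proof.
move=> H.
rewrite (eq_bigr (fun i => ycnt y (y i))); last by move=> i _; rewrite H.
rewrite (regroup_nat y (ycnt y)).
rewrite [RHS](eq_bigr (fun p => ycnt y p.2 ^ N (p.1, p.2))); last by case.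
rewrite -(pair_big xpredT xpredT (fun a b => ycnt y b ^ N (a, b))) /= exchange_big /=.
apply: eq_bigr => b _; by rewrite -expn_sum H.
Qed.

End Main.

End NatPart.

Lemma regroup_r {R : comPzSemiRingType} {I K : finType} (g : I -> K) (F : K -> R) :
  \prod_i F (g i) = \prod_k F k ^+ (\sum_i (g i == k))%N.
Proof.
rewrite (partition_big g xpredT) //=; apply: eq_bigr => k _.
rewrite (eq_bigr (fun _ => F k)); last by move=> i /eqP ->.
rewrite prodr_const; congr (_ ^+ _).
rewrite -sum1_card big_mkcond /=; apply: eq_bigr => i _.
by rewrite -[i \in _]/(g i == k); case: (g i == k).
Qed.

Lemma final_ineq (F : realFieldType) (nn d R lp l2 k : F) : 0 < nn -> 0 <= l2 -> 0 <= R ->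
  d * nn <= - lp -> - lp <= d * nn + k ->
  let e := Num.min (l2 + lp) (nn * R * - 2^-1 + 2^-1 * lp) in
  d + 2^-1 * Num.max 0 (R - d) <= - nn^-1 * (e - l2) /\
  - nn^-1 * (e - l2) <= d + 2^-1 * Num.max 0 (R - d) + (k / nn + nn^-1 * l2).
Proof.
move=> hn hl hR h1 h2 e.
set L := - lp / nn.
have nn0 : nn != 0 by rewrite gt_eqF.
have lpE : lp = - (L * nn) by rewrite /L; field.
have hL1 : d <= L by rewrite /L ler_pdivlMr.
have hL2 : L <= d + k / nn by rewrite /L ler_pdivrMr // mulrDl divfK.
have t0 : 0 <= nn^-1 * l2 by rewrite mulr_ge0 // invr_ge0 ltW.
have E1 : - nn^-1 * (l2 + lp - l2) = L by rewrite lpE; field.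
have E2 : - nn^-1 * (nn * R * - 2^-1 + 2^-1 * lp - l2) = R / 2 + L / 2 + nn^-1 * l2.
  by rewrite lpE; field.
have [m1 m2] : e <= l2 + lp /\ e <= nn * R * - 2^-1 + 2^-1 * lp.
  by split; rewrite /e ge_min lexx ?orbT.
have eC : e = l2 + lp \/ e = nn * R * - 2^-1 + 2^-1 * lp.
  by rewrite /e minEle; case: ifP; [left|right].
have [x1 x2] : 0 <= Num.max 0 (R - d) /\ R - d <= Num.max 0 (R - d).
  by split; rewrite le_max lexx ?orbT.
have xC : Num.max 0 (R - d) = 0 \/ Num.max 0 (R - d) = R - d.
  by rewrite maxEle; case: ifP; [right|left].
have hinv : 0 < nn^-1 by rewrite invr_gt0.
have mono : forall a b, a <= b -> - nn^-1 * (b - l2) <= - nn^-1 * (a - l2).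
  move=> a b ab; rewrite !mulNr lerN2 ler_pM2l //; lra.
have lo1 := mono _ _ m1; have lo2 := mono _ _ m2.
rewrite E1 in lo1; rewrite E2 in lo2.
split.
  case: xC => ->; lra.
case: eC => ->; [rewrite E1|rewrite E2]; case: xC => xE; rewrite xE in x1 x2 *; lra.
Qed.


Theorem lemma13 (R : realType) (X Y : finType) (P : X -> R) (Rate : R)
  (n : nat) (Q : X * Y -> R) (y : {ffun 'I_n -> Y}) :
  is_distr P -> 0 <= Rate -> (0 < n)%N -> is_ntype n Q ->
  (forall b, emp_type y b = marginalY Q b) ->
  let M := expR (n%:R * Rate) in
  let D := relent Q P in
  let lhs := ((- n%:R^-1)%:E * lne (2^-1 * frakY M (p_cond P Q y))%:E)%E in
  (D + (2^-1)%:E * maxe 0%E (Rate%:E - D) <= lhs)%E /\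
  (lhs <= D + (2^-1)%:E * maxe 0%E (Rate%:E - D) + (kappa X Y n)%:E)%E.
Proof.
move=> [P0 P1] HR Hn [[Q0 Q1] HQk] Hemp M D lhs.
have [N HN] := choice HQk.
set nn : R := n%:R.
have nn0 : 0 < nn by rewrite ltr0n.
have nnz : nn != 0 by rewrite gt_eqF.
have divE : forall a b : nat, (a%:R / nn == b%:R / nn) = (a == b).
  by move=> a b; rewrite (inj_eq (mulIf _)) ?invr_eq0 // eqr_nat.
have cardE : forall (P0 : pred 'I_n), #|[set i | P0 i]| = (\sum_i (P0 i : nat))%N.
  move=> P2; rewrite -sum1_card big_mkcond /=; apply: eq_bigr => i _.
  by rewrite inE; case: (P2 i).
have margE : forall b, marginalY Q b = (ycnt y b)%:R / nn.
  by move=> b; rewrite -Hemp /emp_type cardE.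
have HN' : forall b, (\sum_a N (a, b))%N = ycnt y b.
  move=> b; apply/eqP; rewrite -divE -margE /marginalY natr_sum mulr_suml.
  by apply/eqP; apply: eq_bigr => a _; rewrite HN.
have memE : forall x, (x \in cond_type_class Q y) = [forall ab, cntf x y ab == N ab].
  by move=> x; rewrite inE; apply: eq_forallb => ab; rewrite HN cardE divE.
set cP := \prod_(ab : X * Y) P ab.1 ^+ N ab.
have pE : p_cond P Q y = (Sc y N)%:R * cP.
  rewrite /p_cond /Sc natr_sum mulr_suml big_mkcond /=; apply: eq_bigr => x _.
  rewrite memE; case: forallP => T /=; last by rewrite mul0r.
  rewrite mul1r.
  have -> : \prod_(i < n) P (x i) = \prod_ab P ab.1 ^+ cntf x y ab.
    exact: (regroup_r (fun i => (x i, y i)) (fun ab => P ab.1)).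
  by apply: eq_bigr => ab _; rewrite (eqP (T ab)).
have Spos : (0 < Sc y N)%N.
  rewrite lt0n; apply/eqP => S0.
  have : (0 < \prod_b (ycnt y b)`!)%N by apply: prodn_gt0 => b; exact: fact_gt0.
  by rewrite -(count_types HN') S0 mul0n.
rewrite /lhs /D /relent; case: ifPn => [/existsP [[a b] /andP [Qp Pz]] | nex].
  have Npos : (0 < N (a, b))%N.
    move: Qp; rewrite HN lt0n; apply: contraTneq => ->; by rewrite mul0r ltxx.
  have Pa : P a = 0.
    move: Pz; rewrite mulf_eq0 => /orP [/eqP //|/eqP mz].
    have : Q (a, b) <= marginalY Q b.
      by rewrite /marginalY (bigD1 a) //= lerDl sumr_ge0.
    by rewrite mz => /(lt_le_trans Qp); rewrite ltxx.
  have cP0 : cP = 0 by rewrite /cP (bigD1 (a, b)) //= Pa expr0n gtn_eqF // mul0r.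
  have p0 : p_cond P Q y = 0 by rewrite pE cP0 mulr0.
  rewrite p0 /frakY mulr0 powR0 ?invr_eq0 ?pnatr_eq0 // mulr0 minxx mulr0 /= lexx.
  rewrite mulrNy sgrN gtr0_sg ?invr_gt0 // mulN1e /=.
  rewrite addeNy maxeNy mule0 adde0 addye //; split; exact: leey.
set d := \sum_(ab | 0 < Q ab) _.
have mge : forall b, 0 <= marginalY Q b by move=> b; rewrite /marginalY sumr_ge0.
have QN : forall ab, (0 < Q ab) = (0 < N ab)%N.
  by move=> ab; rewrite HN pmulr_lgt0 ?invr_gt0 // ltr0n.
have posN : forall ab, (0 < N ab)%N -> 0 < P ab.1 /\ 0 < (ycnt y ab.2)%:R :> R.
  move=> ab Np; have Qp : 0 < Q ab by rewrite QN.
  have nz : P ab.1 * marginalY Q ab.2 != 0.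
    by move/existsPn: nex => /(_ ab); rewrite Qp.
  rewrite mulf_eq0 negb_or in nz; case/andP: nz => n1 n2.
  split; first by rewrite lt_neqAle eq_sym n1 P0.
  rewrite ltr0n lt0n; apply: contra n2; rewrite margE => /eqP ->; by rewrite mul0r.
have cPpos : 0 < cP.
  apply: prodr_gt0 => ab _; case: (posnP (N ab)) => [->|Np]; first by rewrite expr0.
  by rewrite exprn_gt0 // (posN ab Np).1.
have ppos : 0 < p_cond P Q y by rewrite pE mulr_gt0 // ltr0n.
set Zr : R := (\prod_i \sum_a N (a, y i))%N%:R.
set Kr : R := (\prod_ab N ab ^ N ab)%N%:R.
have Krpos : 0 < Kr.
  rewrite ltr0n; apply: prodn_gt0 => ab; rewrite expn_gt0.
  by case: (N ab).
have nd : - (nn * d) = \sum_(ab | 0 < Q ab)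
     (N ab)%:R * ln (P ab.1 * (ycnt y ab.2)%:R / (N ab)%:R).
  rewrite /d mulr_sumr -sumrN; apply: eq_bigr => ab Qp.
  have Np : (0 < N ab)%N by rewrite -QN.
  have [Pp yp] := posN ab Np.
  have Nr : 0 < (N ab)%:R :> R by rewrite ltr0n.
  rewrite margE HN.
  have -> : (N ab)%:R / nn / (P ab.1 * ((ycnt y ab.2)%:R / nn))
      = (P ab.1 * (ycnt y ab.2)%:R / (N ab)%:R)^-1.
    by field; rewrite ?gt_eqF.
  rewrite lnV ?posrE ?divr_gt0 ?mulr_gt0 //.
  by field.
have key : expR (- (nn * d)) = cP * Zr / Kr.
  rewrite nd expR_sum.
  rewrite [RHS](_ : _ = \prod_ab (P ab.1 * (ycnt y ab.2)%:R / (N ab)%:R) ^+ N ab).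
    rewrite [RHS](bigID (fun ab => 0 < Q ab)) /= [X in _ = _ * X]big1 ?mulr1.
      apply: eq_bigr => ab Qp.
      have [Pp yp] := posN ab (ltac:(by rewrite -QN)).
      by rewrite expRM_natl lnK // posrE divr_gt0 ?mulr_gt0 // ltr0n -QN.
    by move=> ab; rewrite QN -eqn0Ngt => /eqP ->; rewrite expr0.
  rewrite /Zr /Kr (Z_form HN') !natr_prod /cP -prodfV -!big_split /=.
  by apply: eq_bigr => ab _; rewrite !natrX !exprMn exprVn.
have [b1 b2] := bounds HN'.
have b1r : (Sc y N)%:R * Kr <= Zr by rewrite /Kr /Zr -natrM ler_nat.
set C : R := (n.+1 ^ (#|X| * #|Y|))%N%:R.
have b2r : Zr <= C * ((Sc y N)%:R * Kr) by rewrite /Zr /C /Kr -!natrM ler_nat.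
have Cpos : 0 < C by rewrite ltr0n expn_gt0.
have Spos' : 0 < (Sc y N)%:R :> R by rewrite ltr0n.
set p := p_cond P Q y.
have le1 : p <= expR (- (nn * d)).
  rewrite key /p pE ler_pdivlMr //; nra.
have le2 : expR (- (nn * d)) <= C * p.
  rewrite key /p pE ler_pdivrMr //; nra.
have h1 : d * nn <= - ln p.
  have := le1; rewrite -ler_ln ?posrE ?expR_gt0 // expRK => h; rewrite mulrC; lra.
have h2 : - ln p <= d * nn + (#|X| * #|Y|)%:R * ln (n.+1)%:R.
  have := le2; rewrite -ler_ln ?posrE ?mulr_gt0 ?expR_gt0 // expRK lnM ?posrE //.
  rewrite /C natrX lnXn ?ltr0n // -mulr_natl => h; rewrite mulrC; lra.
set lp := ln p.
set e := Num.min (ln 2 + lp) (nn * Rate * - 2^-1 + 2^-1 * lp).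
have fE : 2^-1 * frakY M p = expR (e - ln 2).
  have two : (2:R) \in Num.pos by rewrite posrE.
  rewrite /frakY.
  have -> : 2 * p = expR (ln 2 + lp) by rewrite expRD !lnK // posrE.
  have -> : M `^ (- 2^-1) * p `^ 2^-1 = expR (nn * Rate * - 2^-1 + 2^-1 * lp).
    by rewrite /M -expRM /powR (gt_eqF ppos) -expRD.
  have -> : forall a b : R, Num.min (expR a) (expR b) = expR (Num.min a b).
    by move=> a b; rewrite !minEle ler_expR; case: ifP.
  by rewrite expRD expRN lnK // mulrC.
rewrite fE lne_EFin ?expR_gt0 // expRK -EFinM.
rewrite -EFinB -EFin_max -EFinM -!EFinD !lee_fin -/nn.
have l2 : 0 <= ln (2:R) by apply: ln_ge0; rewrite ler1n.
have := @final_ineq _ _ _ _ _ _ _ nn0 l2 HR h1 h2.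
rewrite -/e /kappa -/nn mulrAC.
by [].
Qed.
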